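(* Let $\mathcal{Q}^T=\mathrm{CSS}(\mathcal{C}_1,\mathcal{C}_2)$ be a T-triorthogonal $[[n,k,d]]$ code with $n-k\equiv 0\pmod 2$. Then there exists a binary linear code $\mathcal{C}\subseteq\mathbb{F}_2^n$ such that $\mathcal{Q}^{\rm Sym}=\mathrm{CSS}(\mathcal{C},\mathcal{C})$ is a symmetric CSS code and the pair $(\mathcal{Q}^T,\mathcal{Q}^{\rm Sym})$ is CNOT-transversal (with $\mathcal{Q}^T$ as control and $\mathcal{Q}^{\rm Sym}$ as target).
   Context: A binary matrix $\mathbf{G}=[G_{ij}]\in\mathbb{F}_2^{m\times n}$ is triorthogonal if $\sum_i G_{ai}G_{bi}=0\pmod 2$ for all rows $a\ne b$ and $\sum_i G_{ai}G_{bi}G_{ci}=0\pmod 2$ for all distinct rows $a,b,c$. Writing $\mathbf{G}=\begin{bmatrix}\mathbf{G}_1\\ \mathbf{G}_0\end{bmatrix}$ (rows assumed linearly independent) with $\mathbf{G}_1$ the $k$ odd-weight rows and $\mathbf{G}_0$ the even-weight rows, the triorthogonal code is $\mathcal{Q}^T=\mathrm{CSS}(\mathcal{C}_1,\mathcal{C}_2)$ with $\mathcal{C}_1$ generated by $\mathbf{G}$ and $\mathcal{C}_2$ the dual of the code generated by $\mathbf{G}_0$. For binary codes with $\mathcal{C}_b^\perp\subset\mathcal{C}_a$, $\mathrm{CSS}(\mathcal{C}_a,\mathcal{C}_b)$ is spanned by $|\bm{\psi}\rangle_L=|\mathcal{C}_b^\perp|^{-1/2}\sum_{\mathbf{y}\in\mathcal{C}_b^\perp}|\bm{\psi}\mathbf{A}+\mathbf{y}\rangle$,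 $\bm{\psi}\in\mathbb{F}_2^k$, where the mapping matrix $\mathbf{A}\in\mathbb{F}_2^{k\times n}$ has rows representing a basis of $\mathcal{C}_a/\mathcal{C}_b^\perp$ (for $\mathcal{Q}^T$, $\mathbf{A}=\mathbf{G}_1$). A CSS code is symmetric if $\mathcal{C}_a=\mathcal{C}_b$. $\mathcal{Q}^T$ is T-triorthogonal if it is Pauli $X$-transversal (applying $\mathbf{X}$ on every physical qubit implements logical $\mathbf{X}$ on every logical qubit); such codes are transversal for $\mathbf{T}=\mathrm{diag}(1,e^{i\pi/4})$. Two codes with $k$ logical qubits on $n$ physical qubits form a CNOT-transversal pair (control first, target second) if, for suitable mapping matrices defining their logical bases, applying physical CNOT from qubit $i$ of the first block to qubit $i$ of the second for all $i$ maps $|\bm{\psi}\rangle_L|\bm{\phi}\rangle_L\mapsto|\bm{\psi}\rangle_L|\bm{\psi}+\bm{\phi}\rangle_L$ for all $\bm{\psi},\bm{\phi}\in\mathbb{F}_2^k$. *)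

(* Defs.v *)
(* Binary codes = row spaces of matrices over 'F_2;
   quantum states = amplitude functions on computational basis vectors,
   with amplitudes in algC. *)
From mathcomp Require Import all_boot all_order all_algebra all_field.
Set Implicit Arguments. Unset Strict Implicit. Unset Printing Implicit Defensive.
Import GRing.Theory Num.Theory.
Local Open Scope ring_scope.

Definition triorthogonal m n (G : 'M['F_2]_(m, n)) : Prop :=
  (forall a b : 'I_m, a != b -> \sum_(i < n) G a i * G b i = 0) /\
  (forall a b c : 'I_m, a != b -> b != c -> a != c ->
      \sum_(i < n) G a i * G b i * G c i = 0).

Definition weight n (v : 'rV['F_2]_n) : nat := #|[set i | v 0 i != 0]|.

Definition dual_code p n (C : 'M['F_2]_(p, n)) : 'M['F_2]_n := kermx C^T.

Definition code_card p n (D : 'M['F_2]_(p, n)) : nat :=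
  #|[set y : 'rV['F_2]_n | (y <= D)%MS]|.

(* n-qubit states (amplitudes on basis |x>), two-block states on 2n qubits. *)
Definition state n := 'rV['F_2]_n -> algC.
Definition state2 n := 'rV['F_2]_n -> 'rV['F_2]_n -> algC.

(* |psi>_L = |D|^{-1/2} sum_{y in D} |psi A + y>  with D = C_b^perp *)
Definition CSS_state k p n (A : 'M['F_2]_(k, n)) (Cb : 'M['F_2]_(p, n))
    (psi : 'rV['F_2]_k) : state n :=
  fun x => if (x - psi *m A <= dual_code Cb)%MS
           then (sqrtC (code_card (dual_code Cb))%:R)^-1 else 0.

(* CSS(Ca, Cb) is well defined: Cb^perp is contained in Ca. *)
Definition is_CSS pa pb n (Ca : 'M['F_2]_(pa, n)) (Cb : 'M['F_2]_(pb, n)) :=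
  (dual_code Cb <= Ca)%MS.

(* the rows of A represent a basis of Ca / Cb^perp *)
Definition is_mapping_matrix k pa pb n (Ca : 'M['F_2]_(pa, n))
    (Cb : 'M['F_2]_(pb, n)) (A : 'M['F_2]_(k, n)) : bool :=
  ((A + dual_code Cb)%MS == Ca)%MS &&
  (\rank (A + dual_code Cb)%MS == (k + \rank (dual_code Cb))%N).

Definition tensor n (f g : state n) : state2 n := fun x y => f x * g y.
(* transversal CNOT: |x>|y> |-> |x>|x+y> *)
Definition cnot_all n (F : state2 n) : state2 n := fun x y => F x (y - x).
(* transversal X: |x> |-> |x + 1> *)
Definition X_all n (f : state n) : state n := fun x => f (x - const_mx 1).

Definition triorthogonal_split k m0 n (G1 : 'M['F_2]_(k, n))
    (G0 : 'M['F_2]_(m0, n)) : Prop :=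
  [/\ triorthogonal (col_mx G1 G0), row_free (col_mx G1 G0),
      (forall a, odd (weight (row a G1))) &
      (forall a, ~~ odd (weight (row a G0)))].

(* Q^T = CSS(C1, C2), C1 = rowspace [G1;G0], C2 = (rowspace G0)^perp,
   logical basis given by A = G1. *)
Definition QT_C1 k m0 n (G1 : 'M['F_2]_(k, n)) (G0 : 'M['F_2]_(m0, n)) :=
  col_mx G1 G0.
Definition QT_C2 m0 n (G0 : 'M['F_2]_(m0, n)) := dual_code G0.

(* Q^T is T-triorthogonal: transversal X implements logical X on all qubits. *)
Definition T_triorthogonal k m0 n (G1 : 'M['F_2]_(k, n))
    (G0 : 'M['F_2]_(m0, n)) : Prop :=
  forall psi : 'rV['F_2]_k,
    X_all (CSS_state G1 (QT_C2 G0) psi) =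
    CSS_state G1 (QT_C2 G0) (psi + const_mx 1).

(* CNOT-transversality for given logical bases (A1 for code 1 = control,
   A2 for code 2 = target). *)
Definition cnot_transversal_with k p1 p2 n (A1 : 'M['F_2]_(k, n))
    (Cb1 : 'M['F_2]_(p1, n)) (A2 : 'M['F_2]_(k, n)) (Cb2 : 'M['F_2]_(p2, n))
    : Prop :=
  forall psi phi : 'rV['F_2]_k,
    cnot_all (tensor (CSS_state A1 Cb1 psi) (CSS_state A2 Cb2 phi)) =
    tensor (CSS_state A1 Cb1 psi) (CSS_state A2 Cb2 (psi + phi)).

(* Main.v *)
Require Import Defs.
From mathcomp Require Import all_boot all_order all_algebra all_field.
From mathcomp Require Import zify.
From Stdlib Require Import FunctionalExtensionality.
Import GRing.Theory Num.Theory.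
Local Open Scope ring_scope.

Lemma F2_cases (x : 'F_2) : x = 0 \/ x = 1.
Proof. case: x => m Hm.
have Hm' : (m < 2)%N by exact: Hm.
case: m Hm Hm' => [|[|m]] Hm Hm'.
- left; apply: val_inj. reflexivity.
- right; apply: val_inj. reflexivity.
- by [].
Qed.

Lemma F2_two : (2%:R : 'F_2) = 0.
Proof. apply: val_inj. reflexivity. Qed.

Lemma F2_sqr (x : 'F_2) : x * x = x.
Proof. by case: (F2_cases x) => ->; rewrite ?mul0r ?mulr1. Qed.

Lemma F2_nat (w : nat) : (w%:R : 'F_2) = (odd w)%:R.
Proof.
by rewrite -[in LHS](odd_double_half w) natrD -muln2 natrM F2_two mulr0 addr0.
Qed.

Lemma F2_sum_weight n (v : 'rV['F_2]_n) :
  \sum_(i < n) v 0 i = (odd (weight v))%:R.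
Proof.
rewrite -F2_nat /weight.
transitivity (\sum_(i < n) (((v 0 i != 0) : nat)%:R : 'F_2)).
  by apply: eq_bigr => i _; case: (F2_cases (v 0 i)) => ->.
rewrite -natr_sum; congr (_ %:R).
rewrite -sum1_card [in RHS]big_mkcond /=; apply: eq_bigr => i _.
by rewrite inE; case: (v 0 i != 0).
Qed.

Lemma self_inner n (v : 'rV['F_2]_n) : v *m v^T = v *m (const_mx 1)^T.
Proof.
apply/matrixP => i j; rewrite !mxE; apply: eq_bigr => l _.
by rewrite !mxE !ord1 F2_sqr mulr1.
Qed.

Lemma rank_G1 k n (G1 : 'M['F_2]_(k,n)) : G1 *m G1^T = 1%:M -> \rank G1 = k.
Proof.
move=> HG; apply/eqP; rewrite eqn_leq rank_leq_row /=.
by rewrite -{1}(mxrank1 'F_2 k) -HG mxrankM_maxl.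
Qed.

Lemma rank_col_G1 k n m (G1 : 'M['F_2]_(k,n)) (D : 'M['F_2]_(m,n)) :
  G1 *m G1^T = 1%:M -> D *m G1^T = 0 -> \rank (col_mx G1 D) = (k + \rank D)%N.
Proof.
move=> HG HD.
have rG : \rank G1 = k.
  exact: rank_G1.
have cap0 : (G1 :&: D <= (0 : 'M_n))%MS.
  apply/row_subP => i.
  have : (row i (G1 :&: D)%MS <= G1 :&: D)%MS by exact: row_sub.
  rewrite sub_capmx => /andP [/submxP [a Ha] /submxP [b Hb]].
  have : a *m G1 *m G1^T = 0 by rewrite -Ha Hb -mulmxA HD mulmx0.
  rewrite -mulmxA HG mulmx1 => Ha0.
  by rewrite Ha Ha0 mul0mx sub0mx.
have := mxrank_sum_cap G1 D.
have -> : \rank (G1 :&: D)%MS = 0%N by apply/eqP; rewrite mxrank_eq0 -submx0.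
by rewrite addn0 rG addsmxE.
Qed.

Lemma dual_dual p n (M : 'M['F_2]_(p,n)) : (dual_code (dual_code M) :=: M)%MS.
Proof.
rewrite /dual_code.
have sMK : (M <= kermx (kermx M^T)^T)%MS.
  by rewrite sub_kermx -[M in M *m _]trmxK -trmx_mul mulmx_ker trmx0.
apply/eqmx_sym/eqmxP.
rewrite -(mxrank_leqif_eq sMK).2 mxrank_ker mxrank_tr mxrank_ker mxrank_tr.
by rewrite subKn ?rank_leq_col.
Qed.

Lemma sub_ker_col n m1 m2 (A : 'M['F_2]_(m1,n)) (B : 'M['F_2]_(m2,n)) (v : 'rV_n) :
  (v <= kermx (col_mx A B)^T)%MS -> v *m A^T = 0 /\ v *m B^T = 0.
Proof.
rewrite sub_kermx tr_col_mx mul_mx_row row_mx_eq0 => /andP [/eqP -> /eqP ->].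
by [].
Qed.

Lemma bound k n m (G1 : 'M['F_2]_(k,n)) (D : 'M['F_2]_(m,n)) :
  G1 *m G1^T = 1%:M -> D *m D^T = 0 -> D *m G1^T = 0 ->
  ((\rank D).*2 + k <= n)%N.
Proof.
move=> HG HDD HDG.
have sD : (D <= kermx (col_mx G1 D)^T)%MS.
  by rewrite sub_kermx tr_col_mx mul_mx_row HDD HDG row_mx0.
have := mxrankS sD; rewrite mxrank_ker mxrank_tr rank_col_G1 //.
have := rank_leq_col D; have := rank_leq_col G1; rewrite rank_G1 //. lia.
Qed.

Lemma extend k n (G1 : 'M['F_2]_(k,n)) : G1 *m G1^T = 1%:M ->
  forall N m (D : 'M['F_2]_(m,n)), (n - \rank D <= N)%N ->
  D *m D^T = 0 -> D *m G1^T = 0 ->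
  (forall v : 'rV_n, v *m G1^T = 0 -> v *m D^T = 0 -> v *m v^T = 0) ->
  exists m' (D' : 'M['F_2]_(m',n)),
    [/\ (D <= D')%MS, D' *m D'^T = 0, D' *m G1^T = 0
      & ((\rank D').*2 + k = n)%N].
Proof.
move=> HG; elim=> [|N IH] m D hN HDD HDG HP.
all: have hb := @bound _ _ _ G1 D HG HDD HDG.
all: case: (boolP ((\rank D).*2 + k == n)%N) => [/eqP He|Hne].
all: try by exists m, D; split.
  have := rank_leq_col D; lia.
have hlt : ((\rank D).*2 + k < n)%N by rewrite ltn_neqAle Hne hb.
set U := kermx (col_mx G1 D)^T.
have rU : \rank U = (n - (k + \rank D))%N by rewrite mxrank_ker mxrank_tr rank_col_G1.
have : ~~ (U <= D)%MS.
  apply/negP => /mxrankS; rewrite rU; lia.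
case/row_subPn => i Hi.
set v := row i U in Hi.
have [vG vD] : v *m G1^T = 0 /\ v *m D^T = 0 by apply: sub_ker_col; exact: row_sub.
have vv := HP v vG vD.
have rD' : \rank (col_mx D v) = (\rank D).+1.
  rewrite -addsmxE; apply/eqP; rewrite eqn_leq.
  have h1 := (mxrank_adds_leqif D v).1.
  have h2 := rank_leq_row v.
  have h3 : (\rank D < \rank (D + v)%MS)%N.
    by apply: rank_ltmx; rewrite ltmxE addsmxSl addsmx_sub submx_refl.
  apply/andP; split; lia.
have h1 : (n - \rank (col_mx D v) <= N)%N by rewrite rD'; lia.
have Dv : D *m v^T = 0 by rewrite -(trmxK D) -trmx_mul vD trmx0.
have h2 : col_mx D v *m (col_mx D v)^T = 0 by rewrite tr_col_mx mul_col_mx !mul_mx_row HDD vD vv Dv !row_mx0 col_mx0.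
have h3 : col_mx D v *m G1^T = 0 by rewrite mul_col_mx HDG vG col_mx0.
have h4 : forall w : 'rV_n, w *m G1^T = 0 -> w *m (col_mx D v)^T = 0 -> w *m w^T = 0.
  move=> w wG; rewrite tr_col_mx mul_mx_row => /eqP; rewrite row_mx_eq0 => /andP [/eqP wD _].
  exact: HP.
have [m' [D' [s1 s2 s3 s4]]] := IH _ (col_mx D v) h1 h2 h3 h4.
exists m', D'; split => //.
apply: submx_trans s1; rewrite -addsmxE; exact: addsmxSl.
Qed.

Lemma sub_shift n m (A W : 'rV['F_2]_n) (D : 'M['F_2]_(m,n)) :
  (W <= D)%MS -> (A - W <= D)%MS = (A <= D)%MS.
Proof.
move=> hW; apply/idP/idP => h.
- by rewrite -(subrK W A); apply: addmx_sub.
- by apply: addmx_sub => //; rewrite eqmx_opp.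
Qed.

Lemma zmod_id (V : zmodType) (a b c d : V) : a - b - d = (a - (c + d)) - (b - c).
Proof.
by rewrite opprB opprD !addrA [a - c - d]addrAC subrK addrAC.
Qed.

Lemma card_pos p n (D : 'M['F_2]_(p,n)) : (0 < code_card D)%N.
Proof. by apply/card_gt0P; exists 0; rewrite inE sub0mx. Qed.

Theorem theorem2 (k m0 n : nat) (G1 : 'M['F_2]_(k, n)) (G0 : 'M['F_2]_(m0, n)) :
  triorthogonal_split G1 G0 ->
  T_triorthogonal G1 G0 ->
  ((n - k) %% 2 = 0)%N ->
  exists C : 'M['F_2]_n,
    is_CSS C C /\
    exists A2 : 'M['F_2]_(k, n),
      is_mapping_matrix C C A2 /\
      cnot_transversal_with G1 (QT_C2 G0) A2 C.
Proof.
move=> [[Hpair _] _ Hodd Heven] HT _.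
have HG : G1 *m G1^T = 1%:M.
  apply/matrixP => a b; rewrite !mxE.
  case: (eqVneq a b) => [<-|nab].
    transitivity (\sum_(j < n) (row a G1) 0 j).
      by apply: (@eq_bigr _ _ _ _ _ _ _ _) => j _; rewrite !mxE F2_sqr.
    by rewrite F2_sum_weight Hodd.
  have := Hpair (lshift m0 a) (lshift m0 b).
  rewrite (inj_eq (@lshift_inj _ _)) nab => /(_ isT) H; apply: etrans H.
  by apply: (@eq_bigr _ _ _ _ _ _ _ _) => j _; rewrite !col_mxEu !mxE.
have H00 : G0 *m G0^T = 0.
  apply/matrixP => a b; rewrite !mxE.
  case: (eqVneq a b) => [<-|nab].
    transitivity (\sum_(j < n) (row a G0) 0 j).
      by apply: (@eq_bigr _ _ _ _ _ _ _ _) => j _; rewrite !mxE F2_sqr.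
    by rewrite F2_sum_weight (negbTE (Heven a)).
  have := Hpair (rshift k a) (rshift k b).
  rewrite (inj_eq (@rshift_inj _ _)) nab => /(_ isT) H; apply: etrans H.
  by apply: (@eq_bigr _ _ _ _ _ _ _ _) => j _; rewrite !col_mxEd !mxE.
have H01 : G0 *m G1^T = 0.
  apply/matrixP => a b; rewrite !mxE.
  have := Hpair (rshift k a) (lshift m0 b).
  rewrite eq_rlshift => /(_ isT) H; apply: etrans H.
  by apply: (@eq_bigr _ _ _ _ _ _ _ _) => j _; rewrite col_mxEd col_mxEu !mxE.
(* T-triorthogonality gives all-ones in G1-span + G0-span *)
set x1 : 'rV['F_2]_n := const_mx 1 *m G1.
have hw : (x1 - const_mx 1 <= G0)%MS.
  have := congr1 (fun f => f x1) (HT 0).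
  rewrite /X_all /CSS_state mul0mx subr0 add0r subrr sub0mx.
  case: ifP => [h _|_ /esym/eqP]; first by rewrite /QT_C2 dual_dual in h.
  by rewrite invr_eq0 sqrtC_eq0 pnatr_eq0 (gtn_eqF (card_pos _ _ _)).
have HP : forall v : 'rV_n, v *m G1^T = 0 -> v *m G0^T = 0 -> v *m v^T = 0.
  move=> v vG vD; rewrite self_inner.
  case/submxP: hw => a Ha.
  have -> : (const_mx 1 : 'rV['F_2]_n) = x1 - a *m G0 by rewrite -Ha opprB addrC subrK.
  by rewrite /x1 linearB /= !trmx_mul mulmxBr !mulmxA vG vD !mul0mx subrr.
have [m' [D [sD DD DG rk]]] := @extend _ _ G1 HG n _ G0 (leq_subr (\rank G0) n) H00 H01 HP.
exists (dual_code D); split.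
  by rewrite /is_CSS dual_dual /dual_code sub_kermx DD.
have GD : G1 *m D^T = 0 by rewrite -(trmxK G1) -trmx_mul DG trmx0.
exists G1; split.
  rewrite /is_mapping_matrix.
  have eA : (G1 + dual_code (dual_code D) :=: G1 + D)%MS :=
    adds_eqmx (eqmx_refl G1) (@dual_dual _ _ D).
  have rDD : \rank (dual_code (dual_code D)) = \rank D := (@dual_dual _ _ D).1.
  rewrite !eA !addsmxE rDD rank_col_G1 // eqxx andbT.
  have sub : (col_mx G1 D <= dual_code D)%MS.
    by rewrite /dual_code sub_kermx mul_col_mx GD DD col_mx0.
  rewrite -(mxrank_leqif_eq sub).2 rank_col_G1 // /dual_code mxrank_ker mxrank_tr.
  apply/eqP; move: rk; move: (\rank D) => r; rewrite -addnn; lia.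
move=> psi phi.
apply: functional_extensionality => x; apply: functional_extensionality => y.
rewrite /cnot_all /tensor /CSS_state.
have eD : forall X : 'rV_n, (X <= dual_code (dual_code D))%MS = (X <= D)%MS :=
  fun X => ((@dual_dual _ _ D).2 1%N X).2.
case hx : (x - psi *m G1 <= dual_code (QT_C2 G0))%MS; last by rewrite !mul0r.
have hxD : (x - psi *m G1 <= D)%MS.
  apply: submx_trans sD.
  have e0 := (((@dual_dual _ _ G0).2 1%N (x - psi *m G1)).2).
  by rewrite /QT_C2 e0 in hx.
have ec : (y - x - phi *m G1 <= dual_code (dual_code D))%MS =
          (y - (psi + phi) *m G1 <= dual_code (dual_code D))%MS.
  by rewrite !eD (zmod_id _ y x (psi *m G1) (phi *m G1)) -mulmxDl sub_shift.
by rewrite ec.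
Qed.
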